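(* Let $G=(V,E)$ be a finite simple graph and let $T\geq 1$ be an integer. If $(s,x,y,z)$ is a feasible solution of the Infection Model $\mathrm{IM}(G,T)$, then $C=\{v\in V\colon s_v=1\}$ is a zero forcing set of $G$ that is the initial set of some zero forcing game in $\mathcal{Z}(G,T)$, and $\mathrm{pt}(G,C)\leq z\leq T$.
   Context: Zero forcing: $n=|V|$, $N(u)$ is the neighborhood of $u$. Under the standard color change rule, a filled vertex $u$ can force a non-filled vertex $v$ if $v$ is the only non-filled neighbor of $u$. A zero forcing game on $G$ with initial set $C\subseteq V$ consists of sets $C^{(0)}=C^{[0]}=C$, sets $C^{(t)}$ (vertices forced at time step $t$) with $C^{[t]}=C^{[t-1]}\cup C^{(t)}$ for $t\geq1$, and a collection $\phi(C)$ of forces $u\to v$, such that every vertex lies in exactly one set $C^{(t)}$, and each $v\in C^{(t)}$ with $t\geq 1$ is forced by exactly one neighbor $u$ (recorded as $u\to v$ in $\phi(C)$) such that $u$ and all neighbors of $u$ other than $v$ lie in $C^{[t-1]}$. The closure of $C$ is the set of filled vertices once no more forces are possible; $C$ is a zero forcing set if its closure is $V$. The propagation time $\mathrm{pt}(G,C)$ is the smallest $t^*$ with $C^{[t^*]}=V$ when at each time step all possible forces are applied simultaneously (i.e. $C^{(t)}$ is the set of all $v\notin C^{[t-1]}$ for which some $u\in C^{[t-1]}$ has $v$ as its unique neighbor outside $C^{[t-1]}$), and $\mathrm{pt}(G,C)=\infty$ if $C$ is not a zero forcing set. $\mathcal{Z}(G,T)$ denotes the family of all zero forcing games on $G$ whose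 initial set is a zero forcing set and which use at most $T$ time steps. Infection Model: let $A$ be the set of arcs containing both $(u,v)$ and $(v,u)$ for each edge $\{u,v\}\in E$, and $[T]=\{1,\dots,T\}$. The model $\mathrm{IM}(G,T)$ has variables $s_v\in\{0,1\}$ and $x_v\in\{0,1,\dots,T\}$ for $v\in V$, $y_a\in\{0,1\}$ for $a\in A$, and $z\in\{0,1,\dots,T\}$, subject to: (i) $s_v+\sum_{a=(u,v)\in A}y_a=1$ for all $v\in V$; (ii) $x_u-x_v+(T+1)y_a\leq T$ for all $a=(u,v)\in A$; (iii) $x_w-x_v+(T+1)y_a\leq T$ for all $a=(u,v)\in A$ and $w\in N(u)\setminus\{v\}$; (iv) $x_v-z\leq 0$ for all $v\in V$. Its objective is to minimize $\sum_{v\in V}s_v$. A feasible solution is one satisfying all these constraints. *)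

(* Defs.v *)
From mathcomp Require Import all_boot.
From Stdlib Require Import ClassicalEpsilon.
Set Implicit Arguments. Unset Strict Implicit. Unset Printing Implicit Defensive.

Section ZF.
Variable V : finType.
Variable e : rel V.

Definition simple_graph : Prop := symmetric e /\ irreflexive e.

Definition zf_step (S : {set V}) : {set V} :=
  S :|: [set v | (v \notin S) &&
           [exists u, [&& u \in S, e u v &
              [forall w, (e u w && (w \notin S)) ==> (w == v)]]]].

Definition zf_filled (C : {set V}) (t : nat) : {set V} := iter t zf_step C.

Definition zero_forcing_set (C : {set V}) : Prop :=
  exists t, zf_filled C t = [set: V].

(* propagation time: Some (smallest t with C^[t] = V), None = infinity *)
Definition pt (C : {set V}) : option nat :=
  match excluded_middle_informative (exists t, zf_filled C t == [set: V]) with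
  | left H => Some (ex_minn H)
  | right _ => None
  end.

(* A zero forcing game with initial set C using at most T time steps,
   described by the time  tm v  (v \in C^(tm v)) and the forcer  f v
   (the force  f v -> v  in phi(C) for every v with tm v >= 1). *)
Definition zf_game (C : {set V}) (T : nat) (tm : V -> nat) (f : V -> V) : Prop :=
  [/\ forall v, (tm v == 0) = (v \in C),
      forall v, tm v <= T &
      forall v, 0 < tm v ->
        [/\ e (f v) v, tm (f v) < tm v &
            forall w, e (f v) w -> w != v -> tm w < tm v]].

Definition in_ZGT (C : {set V}) (T : nat) : Prop :=
  zero_forcing_set C /\ exists tm f, zf_game C T tm f.

(* Feasibility for IM(G,T).  s_v, y_a in {0,1} are booleans (coerced to nat);
   y is indexed by pairs, only pairs (u,v) with e u v (the arcs) matter.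
   Integer constraints (ii)-(iv) are rearranged to avoid subtraction. *)
Definition IM_feasible (T : nat) (s : V -> bool) (x : V -> nat)
    (y : V -> V -> bool) (z : nat) : Prop :=
  [/\ (forall v, x v <= T), z <= T,
      (forall v, s v + \sum_(u | e u v) y u v = 1) &
   [/\
      (forall u v, e u v -> x u + (T.+1) * y u v <= T + x v),
      (forall u v w, e u v -> e u w -> w != v -> x w + (T.+1) * y u v <= T + x v) &
      (forall v, x v <= z)]].

End ZF.

(* Main.v *)
Require Import Defs.
From mathcomp Require Import all_boot.
From mathcomp Require Import zify.
From Stdlib Require Import ClassicalEpsilon.

Theorem theorem3p1 (V : finType) (e : rel V) (T : nat)
    (s : V -> bool) (x : V -> nat) (y : V -> V -> bool) (z : nat) :
  simple_graph e -> 1 <= T ->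
  IM_feasible e T s x y z ->
  let C := [set v | s v] in
  [/\ zero_forcing_set e C, in_ZGT e C T &
      exists p, [/\ pt e C = Some p, p <= z & z <= T]].
Proof.
move=> _ HT [Hx Hz Hs [H2 H3 Hxz]] C.
pose tm := fun v => if s v then 0 else x v.
pose f := fun v => odflt v [pick u | e u v && y u v].
have Hf : forall v, ~~ s v -> e (f v) v && y (f v) v.
  move=> v sv; rewrite /f; case: pickP => [u //|H0]; exfalso.
  have := Hs v; rewrite (negbTE sv) big1 //.
  by move=> u euv; have := H0 u; rewrite euv /= => ->.
have Hgame : zf_game e C T tm f.
  split.
  - move=> v; rewrite /tm inE; case sv: (s v) => //=.
    have /andP[euv yuv] := Hf v (negbT sv).
    have := H2 _ _ euv; rewrite yuv muln1 => h; apply/eqP; lia.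
  - by move=> v; rewrite /tm; case: (s v).
  - move=> v; rewrite /tm; case: ifP => // sv xv0.
    have /andP[euv yuv] := Hf v (negbT sv).
    have := H2 _ _ euv; rewrite yuv muln1 => h.
    split => //; first by case: (s (f v)); lia.
    move=> w euw wv; have := H3 _ _ _ euv euw wv; rewrite yuv muln1.
    case: (s w); lia.
have Hmono : forall S : {set V}, S \subset zf_step e S by move=> S; rewrite /zf_step subsetUl.
have [G0 _ G2] := Hgame.
have Hind : forall t v, tm v <= t -> v \in zf_filled e C t.
  elim => [|t IH] v.
    by rewrite leqn0 /zf_filled /= => /eqP h; rewrite -G0 h.
  move=> htv; rewrite /zf_filled iterS -/(zf_filled e C t).
  case: (boolP (v \in zf_filled e C t)) => hv; first by apply: (subsetP (Hmono _)).
  have tv : tm v = t.+1.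
    case: (ltnP (tm v) t.+1) => h; last lia.
    by rewrite IH in hv.
  have [he hlt hw] := G2 v (ltac:(lia)).
  rewrite /zf_step inE; apply/orP; right; rewrite inE hv /=.
  apply/existsP; exists (f v); rewrite he IH /=; last lia.
  apply/forallP => w; apply/implyP => /andP[ew wn].
  apply/negPn/negP => wv; have := hw w ew wv => hlt'.
  by rewrite IH in wn; lia.
have Hall : zf_filled e C z = [set: V].
  apply/setP => v; rewrite inE; apply Hind; rewrite /tm; case: (s v) => //.
have ZF : zero_forcing_set e C by exists z.
split => //.
- by split => //; exists tm, f.
- rewrite /pt; case: excluded_middle_informative => [H|H]; last first.
    by exfalso; apply H; exists z; apply/eqP.
  exists (ex_minn H); split => //.
  case: ex_minnP => m _ hm; apply hm; apply/eqP; exact Hall.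
Qed.
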